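(* Let $\kappa<0$ and $\mu<0$, and set $\sigma=\sqrt{\mu/\kappa}>0$. Fix a real constant $K_0$ and a choice of signs (the same choice in each formula below). For $\tau>0$ define \[ \tilde q_0(x)=\sigma\tanh\!\Big(\pm\sigma\sqrt{\tfrac{\kappa(\mu\tau-1)}{2}}\,x\pm K_0\Big),\qquad \tilde q_1(x)=\frac{1}{1-\mu\tau}\,\tilde q_0'(x), \] which give standing front solutions $e^{i\mu t}(\tilde q_0(x),\tilde q_1(x))$ of the NLSH system $i\partial_tq_0+\partial_xq_1=-\kappa|q_0|^2q_0$, $i\tau\partial_tq_1=\partial_xq_0-q_1$, and let \[ u^-(x)=\sigma\tanh\!\Big(\pm\sigma\sqrt{-\kappa/2}\,x\pm K_0\Big) \] (the amplitude of the dark-soliton ground state $e^{i\mu t}u^-(x)$ of the NLS equation $iu_t+u_{xx}+\kappa|u|^2u=0$). Then as $\tau\to0$, the family $\{\tilde q_0\}_{\tau>0}$ converges uniformly on $\mathbb{R}$ to $u^-$ at a rate linear in $\tau$, i.e. $\sup_{x\in\mathbb{R}}|\tilde q_0(x)-u^-(x)|=O(\tau)$, and $\{\tilde q_1\}_{\tau>0}$ converges uniformly on $\mathbb{R}$ to $(u^-)'$ at a rate linear in $\tau$.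
   Context: Standing-wave ansatz: $(q_0,q_1)(x,t)=e^{i\mu t}(\tilde q_0(x),\tilde q_1(x))$ with $\mu\in\mathbb{R}$, which reduces NLSH to $\tilde q_0'=(1-\mu\tau)\tilde q_1$, $\tilde q_1'=(\mu-\kappa\tilde q_0^2)\tilde q_0$. *)

(* Defs.v *)
From Stdlib Require Import Reals.
From Coquelicot Require Import Coquelicot.
Open Scope R_scope.

Definition tanh (y : R) : R := (exp y - exp (- y)) / (exp y + exp (- y)).

Definition sigma (kappa mu : R) : R := sqrt (mu / kappa).

(* standing-front amplitude q0~ for NLSH with relaxation parameter tau;
   s1, s2 are the chosen signs (+1 or -1). *)
Definition q0t (kappa mu K0 s1 s2 tau : R) (x : R) : R :=
  sigma kappa mu *
  tanh (s1 * sigma kappa mu * sqrt (kappa * (mu * tau - 1) / 2) * x + s2 * K0).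

Definition q1t (kappa mu K0 s1 s2 tau : R) (x : R) : R :=
  / (1 - mu * tau) * Derive (q0t kappa mu K0 s1 s2 tau) x.

Definition uminus (kappa mu K0 s1 s2 : R) (x : R) : R :=
  sigma kappa mu *
  tanh (s1 * sigma kappa mu * sqrt (- kappa / 2) * x + s2 * K0).

(* Main.v *)
Require Import Defs.
From Stdlib Require Import Reals Lra.
From Coquelicot Require Import Coquelicot.
Open Scope R_scope.

Definition sech2 (y : R) : R := 4 / (exp y + exp (- y))^2.

Lemma cosh_pos y : 0 < exp y + exp (-y).
Proof. pose proof (exp_pos y); pose proof (exp_pos (-y)); lra. Qed.

Lemma tanh_deriv y : is_derive Defs.tanh y (sech2 y).
Proof.
  pose proof (cosh_pos y). pose proof (exp_pos y).
  unfold Defs.tanh, sech2. auto_derive; unfold cosh, sinh; rewrite ?exp_Ropp in *. lra.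
  field. split; nra.
Qed.
Lemma sech2_deriv y : is_derive sech2 y (-2 * sech2 y * Defs.tanh y).
Proof.
  pose proof (cosh_pos y). pose proof (exp_pos y).
  unfold Defs.tanh, sech2. auto_derive; unfold cosh, sinh; rewrite ?exp_Ropp in *. 
  nra. field. split; nra.
Qed.

Lemma exp_prod y : exp y * exp (-y) = 1.
Proof. rewrite <- exp_plus. replace (y + - y) with 0 by ring. apply exp_0. Qed.

Lemma cosh_ge y : 1 + Rabs y <= exp y + exp (-y).
Proof.
  pose proof (exp_pos y); pose proof (exp_pos (-y)).
  pose proof (exp_ineq1_le y); pose proof (exp_ineq1_le (-y)).
  unfold Rabs; destruct (Rcase_abs y); lra.
Qed.

Lemma sech2_bnd y : 0 <= sech2 y <= 1 /\ sech2 y * (1 + Rabs y) <= 4.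
Proof.
  pose proof (exp_pos y); pose proof (exp_pos (-y)). pose proof (exp_prod y).
  pose proof (cosh_ge y). pose proof (Rabs_pos y).
  set (E := exp y) in *. set (F := exp (-y)) in *. unfold sech2. fold E F.
  assert (4 <= (E+F)^2) by (pose proof (pow2_ge_0 (E-F)); nra). assert (0 < (E+F)^2) by lra.
  assert (1 + Rabs y <= (E+F)^2) by nra.
  split. split.
  - apply Rlt_le, Rdiv_lt_0_compat; nra.
  - apply (Rmult_le_reg_r ((E+F)^2)). nra. unfold Rdiv. rewrite Rmult_assoc, Rinv_l; nra.
  - apply (Rmult_le_reg_r ((E+F)^2)). nra. unfold Rdiv.
    replace (4 * / (E + F) ^ 2 * (1 + Rabs y) * (E + F) ^ 2) with (4 * (1 + Rabs y) * ((E+F)^2 * /(E+F)^2)) by ring.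
    rewrite Rinv_r; nra.
Qed.

Lemma tanh_bnd y : Rabs (Defs.tanh y) <= 1.
Proof.
  pose proof (exp_pos y); pose proof (exp_pos (-y)).
  unfold Defs.tanh. unfold Rdiv; rewrite Rabs_mult, Rabs_inv. rewrite (Rabs_right (exp y + exp (-y))) by lra.
  apply (Rmult_le_reg_r (exp y + exp (-y))). lra.
  rewrite Rmult_assoc, Rinv_l by lra.
  unfold Rabs; destruct (Rcase_abs _); lra.
Qed.

Lemma dsech2_bnd y : Rabs (-2 * sech2 y * Defs.tanh y) * (1 + Rabs y) <= 8.
Proof.
  destruct (sech2_bnd y) as [[H0 H1] H2]. pose proof (tanh_bnd y). pose proof (Rabs_pos y).
  pose proof (Rabs_pos (Defs.tanh y)).
  rewrite !Rabs_mult, (Rabs_left (-2)) by lra. rewrite (Rabs_right (sech2 y)) by lra.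
  nra.
Qed.

Lemma tanh_bnd2 y : Rabs (sech2 y) * (1 + Rabs y) <= 4.
Proof. destruct (sech2_bnd y) as [[H0 H1] H2]. rewrite Rabs_right by lra. lra. Qed.

Lemma Xd (g g' : R -> R) x k : (forall y, is_derive g y (g' y)) -> forall t, is_derive (fun t => g (t*x+k)) t (x * g' (t*x+k)).
Proof. intros Hd t.
  replace (x * g' (t*x+k)) with (scal x (g' (t*x+k))) by reflexivity.
  apply (is_derive_comp g (fun t => t*x+k)). apply Hd.
  auto_derive; auto; ring.
Qed.
Lemma Yc (f f' : R -> R) t : (forall y, is_derive f y (f' y)) -> continuity_pt f t.
Proof. intros H. apply continuity_pt_filterlim. apply (ex_derive_continuous (V:=R_NormedModule) f). eexists; apply H. Qed.

Lemma mvt_lemma (g g' : R -> R) (B : R) :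
  (forall y, is_derive g y (g' y)) ->
  (forall y, Rabs (g' y) * (1 + Rabs y) <= B) ->
  forall a b x k, 0 < b <= a ->
  Rabs (g (a*x+k) - g (b*x+k)) <= B * (1 + Rabs k) / b * (a - b).
Proof.
  intros Hd HB a b x k Hab.
  destruct (MVT_gen (fun t => g (t*x+k)) b a (fun t => x * g' (t*x+k))) as [c [Hc Heq]].
  - intros t _. apply Xd. exact Hd.
  - intros t _. apply (Yc _ (fun t => x * g' (t*x+k))). apply Xd. exact Hd.
  - rewrite Rmin_left in Hc by lra. rewrite Rmax_right in Hc by lra.
    simpl in Heq. rewrite Heq.
    set (y := c*x+k) in *.
    assert (Hx : Rabs x * c <= Rabs y + Rabs k).
    { replace (Rabs x * c) with (Rabs (y - k)).
      2:{ unfold y. replace (c*x+k-k) with (x*c) by ring. rewrite Rabs_mult, (Rabs_right c) by lra. ring. }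
      unfold Rminus. eapply Rle_trans. apply Rabs_triang. rewrite Rabs_Ropp. lra. }
    assert (Hg := HB y).
    pose proof (Rabs_pos x). pose proof (Rabs_pos y). pose proof (Rabs_pos k). pose proof (Rabs_pos (g' y)).
    rewrite Rabs_mult, Rabs_mult, (Rabs_right (a-b)) by lra.
    assert (Rabs x * b <= (1 + Rabs y) * (1 + Rabs k)) by nra.
    assert (Rabs x * Rabs (g' y) * b <= B * (1 + Rabs k)) by nra.
    unfold Rdiv. 
    apply Rmult_le_compat_r. lra.
    apply (Rmult_le_reg_r b). lra. field_simplify. lra. lra.
Qed.

Lemma Derive_th (s c k x : R) :
  Derive (fun x => s * Defs.tanh (c*x+k)) x = s * (c * sech2 (c*x+k)).
Proof.
  apply is_derive_unique.
  apply (is_derive_scal (fun x => Defs.tanh (c*x+k))).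
  replace (c * sech2 (c*x+k)) with (scal c (sech2 (c*x+k))) by reflexivity.
  apply (is_derive_comp Defs.tanh (fun x => c*x+k)). apply tanh_deriv.
  auto_derive; auto; ring.
Qed.

Theorem proposition1 (kappa mu K0 s1 s2 : R) :
  kappa < 0 -> mu < 0 ->
  (s1 = 1 \/ s1 = -1) -> (s2 = 1 \/ s2 = -1) ->
  exists C tau0 : R, 0 < tau0 /\
    forall tau : R, 0 < tau < tau0 ->
      (forall x : R,
         Rabs (q0t kappa mu K0 s1 s2 tau x - uminus kappa mu K0 s1 s2 x) <= C * tau) /\
      (forall x : R,
         Rabs (q1t kappa mu K0 s1 s2 tau x
               - Derive (uminus kappa mu K0 s1 s2) x) <= C * tau).
Proof.
  intros hk hm hs1 hs2.
  assert (hs1s : s1 * s1 = 1) by (destruct hs1; subst; ring).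
  assert (hs1a : Rabs s1 = 1) by (destruct hs1; subst; [apply Rabs_R1 | rewrite Rabs_left; lra]).
  set (s := Defs.sigma kappa mu).
  assert (hsp : 0 < s).
  { unfold s, Defs.sigma. apply sqrt_lt_R0. replace (mu/kappa) with ((-mu)/(-kappa)) by (field; lra).
    apply Rdiv_lt_0_compat; lra. }
  set (A := - kappa / 2).
  set (sA := sqrt A).
  assert (hsA : 0 < sA) by (apply sqrt_lt_R0; unfold A; lra).
  set (b := s * sA).
  assert (hb : 0 < b) by (unfold b; nra).
  set (D := s * (kappa * mu) / (2 * sA)).
  assert (hD : 0 <= D).
  { assert (0 < kappa*mu) by nra. unfold D. apply Rlt_le, Rdiv_lt_0_compat; [apply Rmult_lt_0_compat|]; lra. }
  set (m := - mu).
  set (k := s2 * K0).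
  pose proof (Rabs_pos k) as hk0.
  set (C1 := s * (4 * (1 + Rabs k) / b * D)).
  set (C2 := s * (D + (b + D) * m + 8 * (1 + Rabs k) * D)).
  assert (hC1 : 0 <= C1).
  { unfold C1. apply Rmult_le_pos. lra. apply Rmult_le_pos; [|lra].
    apply Rlt_le, Rdiv_lt_0_compat; lra. }
  assert (hC2 : 0 <= C2).
  { unfold C2. apply Rmult_le_pos. lra. unfold m. nra. }
  exists (C1 + C2), 1. split; [lra|].
  intros tau [ht0 ht1].
  set (X := kappa * (mu * tau - 1) / 2).
  set (sX := sqrt X).
  assert (hkm : 0 <= kappa*mu*tau) by (apply Rmult_le_pos; nra).
  assert (hAX : A <= X) by (unfold A, X; lra).
  assert (hsAX : sA <= sX) by (apply sqrt_le_1_alt; exact hAX).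
  assert (hsq : sX * sX - sA * sA = X - A).
  { unfold sX, sA. rewrite !sqrt_sqrt; unfold A in *; lra. }
  set (a := s * sX).
  assert (hba : 0 < b <= a) by (unfold a, b; split; nra).
  assert (hab : a - b <= D * tau).
  { assert (h1 : (sX - sA) * sA <= X - A) by nra.
    assert (h2 : D * tau * sA = s * (X - A)).
    { unfold D, X, A. field. lra. }
    assert (h3 : (a - b) * sA <= D * tau * sA).
    { rewrite h2. unfold a, b. nra. }
    apply (Rmult_le_reg_r sA); lra. }
  assert (Hq0 : forall x, q0t kappa mu K0 s1 s2 tau x = s * Defs.tanh (a * (s1 * x) + k)).
  { intros x. unfold q0t. fold s. fold k. unfold a, sX, X. f_equal. f_equal. ring. }
  assert (Hu : forall x, uminus kappa mu K0 s1 s2 x = s * Defs.tanh (b * (s1 * x) + k)).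
  { intros x. unfold uminus. fold s. fold k. unfold b, sA, A. f_equal. f_equal. ring. }
  split.
  - intros x. rewrite Hq0, Hu.
    replace (s * Defs.tanh (a * (s1 * x) + k) - s * Defs.tanh (b * (s1 * x) + k))
      with (s * (Defs.tanh (a * (s1 * x) + k) - Defs.tanh (b * (s1 * x) + k))) by ring.
    rewrite Rabs_mult, (Rabs_right s) by lra.
    pose proof (mvt_lemma Defs.tanh sech2 4 tanh_deriv tanh_bnd2 a b (s1*x) k hba) as H.
    assert (4 * (1 + Rabs k) / b * (a - b) <= 4 * (1 + Rabs k) / b * D * tau).
    { rewrite Rmult_assoc. apply Rmult_le_compat_l. apply Rlt_le, Rdiv_lt_0_compat; lra. lra. }
    assert (s * Rabs (Defs.tanh (a * (s1 * x) + k) - Defs.tanh (b * (s1 * x) + k)) <= C1 * tau).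
    { unfold C1. rewrite Rmult_assoc. apply Rmult_le_compat_l. lra. lra. }
    nra.
  - intros x.
    assert (Hd1 : Derive (q0t kappa mu K0 s1 s2 tau) x = s * ((s1 * a) * sech2 (a * (s1 * x) + k))).
    { unfold q0t. rewrite Derive_th. fold s. fold k. unfold a, sX, X.
      f_equal. f_equal. ring. f_equal. ring. }
    assert (Hd2 : Derive (uminus kappa mu K0 s1 s2) x = s * ((s1 * b) * sech2 (b * (s1 * x) + k))).
    { unfold uminus. rewrite Derive_th. fold s. fold k. unfold b, sA, A.
      f_equal. f_equal. ring. f_equal. ring. }
    unfold q1t. rewrite Hd1, Hd2.
    set (S1 := sech2 (a * (s1 * x) + k)).
    set (S2 := sech2 (b * (s1 * x) + k)).
    set (r := / (1 - mu * tau) * a).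
    assert (hr1 : r * (1 + m * tau) = a) by (unfold r, m; field; nra).
    assert (hr2 : r <= a) by (unfold m in *; nra).
    assert (hr3 : a - a * m * tau <= r).
    { unfold m in *. nra. }
    replace (/ (1 - mu * tau) * (s * (s1 * a * S1)) - s * (s1 * b * S2))
      with ((s * s1) * ((r - b) * S1 + b * (S1 - S2))) by (unfold r; ring).
    rewrite Rabs_mult, Rabs_mult, hs1a, (Rabs_right s) by lra.
    destruct (sech2_bnd (a * (s1 * x) + k)) as [[hS0 hS1] _]. fold S1 in hS0, hS1.
    pose proof (mvt_lemma sech2 (fun y => -2 * sech2 y * Defs.tanh y) 8 sech2_deriv dsech2_bnd a b (s1*x) k hba) as H.
    fold S1 S2 in H.
    assert (hbS : b * Rabs (S1 - S2) <= 8 * (1 + Rabs k) * D * tau).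
    { assert (b * Rabs (S1 - S2) <= 8 * (1 + Rabs k) * (a - b)).
      { apply (Rmult_le_compat_l b) in H; [|lra].
        replace (b * (8 * (1 + Rabs k) / b * (a - b))) with (8 * (1 + Rabs k) * (a - b)) in H by (field; lra).
        exact H. }
      nra. }
    assert (hrb : Rabs (r - b) <= D * tau + (b + D) * m * tau).
    { assert (a <= b + D) by nra.
      assert (0 < m) by (unfold m; lra).
      unfold Rabs; destruct (Rcase_abs _); nra. }
    assert (Rabs ((r - b) * S1 + b * (S1 - S2)) <= Rabs (r - b) + b * Rabs (S1 - S2)).
    { eapply Rle_trans. apply Rabs_triang. rewrite !Rabs_mult, (Rabs_right S1), (Rabs_right b) by lra.
      pose proof (Rabs_pos (r - b)). nra. }
    assert (s * 1 * Rabs ((r - b) * S1 + b * (S1 - S2)) <= C2 * tau).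
    { unfold C2. rewrite Rmult_1_r, Rmult_assoc. apply Rmult_le_compat_l. lra. nra. }
    nra.
Qed.
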